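(* Let $h:\mathbb R^n\to\mathbb R$, $h(x):=\|g_r(x)\|-g_0(x)$. For every $\delta>0$ there exist $\epsilon>0$ and a neighborhood $U$ of $\bar x$ such that for every $x_0\in U$ with $g_r(x_0)\neq0$, $|h(x_0)|<\epsilon\|g_r(x_0)\|$ and $\|\nabla h(x_0)\|\ge\delta$, there exists $\tilde x\in\mathbb R^n$ with $h(\tilde x)=0$ and $\|\tilde x-x_0\|\le 2|h(x_0)|/\delta$.
   Context: Let $n,m\ge1$ and let $g=(g_0,g_r):\mathbb R^n\to\mathbb R\times\mathbb R^m$ be $C^2$-smooth around a point $\bar x\in\mathbb R^n$ with $g(\bar x)=0$. (Note $h$ is $C^2$ near every point $x$ with $g_r(x)\ne0$ close to $\bar x$.) *)

(* Defs.v *)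
From Stdlib Require Import Reals.
From mathcomp Require Import all_boot.
Open Scope R_scope.

Definition vec (n : nat) := 'I_n -> R.

Definition vzero (n : nat) : vec n := fun _ => 0.
Definition vsub {n : nat} (x y : vec n) : vec n := fun i => x i - y i.
Definition vdot {n : nat} (x y : vec n) : R := \big[Rplus/0]_(i < n) (x i * y i).
Definition vnorm {n : nat} (x : vec n) : R := sqrt (vdot x x).

Definition has_grad {n : nat} (f : vec n -> R) (x v : vec n) : Prop :=
  forall eps, 0 < eps -> exists d, 0 < d /\
    forall y, vnorm (vsub y x) < d ->
      Rabs (f y - f x - vdot v (vsub y x)) <= eps * vnorm (vsub y x).

Definition C2_on {n : nat} (f : vec n -> R) (c : vec n) (r : R) : Prop :=
  exists (G : vec n -> vec n) (H : vec n -> 'I_n -> vec n),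
    (forall x, vnorm (vsub x c) < r -> has_grad f x (G x)) /\
    (forall x, vnorm (vsub x c) < r -> forall i : 'I_n,
        has_grad (fun y => G y i) x (H x i)) /\
    (forall x, vnorm (vsub x c) < r -> forall eps, 0 < eps -> exists d, 0 < d /\
        forall y, vnorm (vsub y c) < r -> vnorm (vsub y x) < d ->
          forall i j : 'I_n, Rabs (H y i j - H x i j) < eps).

Definition hfun {n m : nat} (g0 : vec n -> R) (gr : vec n -> vec m) (x : vec n) : R :=
  vnorm (gr x) - g0 x.

(* Main.v *)
From HB Require Import structures.
Require Import Defs.
From Stdlib Require Import Reals Lra Psatz FunctionalExtensionality ClassicalEpsilon.
From mathcomp Require Import all_boot.
Open Scope R_scope.

Lemma RplusA : associative Rplus. Proof. move=>*; ring. Qed.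
Lemma RmultA : associative Rmult. Proof. move=>*; ring. Qed.
HB.instance Definition _ := Monoid.isComLaw.Build R 0 Rplus RplusA Rplus_comm Rplus_0_l.
HB.instance Definition _ := Monoid.isComLaw.Build R 1 Rmult RmultA Rmult_comm Rmult_1_l.
HB.instance Definition _ := Monoid.isMulLaw.Build R 0 Rmult Rmult_0_l Rmult_0_r.
HB.instance Definition _ := Monoid.isAddLaw.Build R Rmult Rplus Rmult_plus_distr_r Rmult_plus_distr_l.


Section Sums.
Context {n : nat}.
Implicit Types F G : 'I_n -> R.

Lemma bsum_le F G : (forall i, F i <= G i) -> \big[Rplus/0]_(i < n) F i <= \big[Rplus/0]_(i < n) G i.
Proof. move=> H. apply: (big_ind2 (fun a b => a <= b)) => //; [lra | move=> *; lra]. Qed.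

Lemma bsum_ge0 F : (forall i, 0 <= F i) -> 0 <= \big[Rplus/0]_(i < n) F i.
Proof. move=> H. apply: (big_ind (fun a => 0 <= a)) => //; [lra | move=> *; lra]. Qed.

Lemma bsum_abs F : Rabs (\big[Rplus/0]_(i < n) F i) <= \big[Rplus/0]_(i < n) Rabs (F i).
Proof.
apply: (big_ind2 (fun a b => Rabs a <= b)); first by rewrite Rabs_R0; lra.
  move=> a b c d H1 H2. apply: Rle_trans (Rabs_triang _ _) _. lra.
move=> i _; lra.
Qed.

Lemma term_le_sum F j : (forall i, 0 <= F i) -> F j <= \big[Rplus/0]_(i < n) F i.
Proof.
move=> H. rewrite (bigD1 j) //=.
rewrite -[X in X <= _]Rplus_0_r; apply: Rplus_le_compat_l.
apply: (big_ind (fun a => 0 <= a)); [lra | move=> *; lra | move=> i _; exact: H].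
Qed.

Lemma bsum_plus F G : \big[Rplus/0]_(i < n) (F i + G i) = \big[Rplus/0]_(i < n) F i + \big[Rplus/0]_(i < n) G i.
Proof. by rewrite big_split. Qed.

Lemma bsum_scal c F : \big[Rplus/0]_(i < n) (c * F i) = c * \big[Rplus/0]_(i < n) F i.
Proof. by rewrite big_distrr. Qed.

Lemma bsum_ext F G : (forall i, F i = G i) -> \big[Rplus/0]_(i < n) F i = \big[Rplus/0]_(i < n) G i.
Proof. move=> H; exact: eq_bigr. Qed.

Lemma bsum_opp F : \big[Rplus/0]_(i < n) (- F i) = - (\big[Rplus/0]_(i < n) F i).
Proof.
have -> : - (\big[Rplus/0]_(i < n) F i) = -1 * \big[Rplus/0]_(i < n) F i by ring.
rewrite -bsum_scal; apply: bsum_ext => i; ring.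
Qed.

Lemma bsum_const c : \big[Rplus/0]_(i < n) c = INR n * c.
Proof.
rewrite big_const_ord. elim: n => [|k IH]; first by rewrite /=; ring.
rewrite S_INR; simpl iter; rewrite IH; ring.
Qed.
End Sums.

Lemma bsum_exch n m (F : 'I_n -> 'I_m -> R) :
  \big[Rplus/0]_(i < n) \big[Rplus/0]_(j < m) F i j = \big[Rplus/0]_(j < m) \big[Rplus/0]_(i < n) F i j.
Proof. exact: exchange_big. Qed.

Definition l1 {n} (x : vec n) := \big[Rplus/0]_(i < n) Rabs (x i).

Section Vec.
Context {n : nat}.
Implicit Types x y z : vec n.

Lemma vdot_comm x y : vdot x y = vdot y x.
Proof. rewrite /vdot; apply: bsum_ext => i; ring. Qed.

Lemma vdot_lin x y z a b : vdot x (fun i => a * y i + b * z i) = a * vdot x y + b * vdot x z.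
Proof.
rewrite /vdot -!bsum_scal -bsum_plus; apply: bsum_ext => i; ring.
Qed.

Lemma vdot_linl x y z a b : vdot (fun i => a * y i + b * z i) x = a * vdot y x + b * vdot z x.
Proof. rewrite vdot_comm vdot_lin (vdot_comm x y) (vdot_comm x z); ring. Qed.

Lemma vdot_sub x y z : vdot x (vsub y z) = vdot x y - vdot x z.
Proof.
have -> : vsub y z = (fun i => 1 * y i + (-1) * z i).
  apply: functional_extensionality => i; rewrite /vsub; ring.
rewrite vdot_lin; ring.
Qed.

Lemma vdot_subl x y z : vdot (vsub y z) x = vdot y x - vdot z x.
Proof. by rewrite vdot_comm vdot_sub !(vdot_comm x). Qed.

Lemma vdot_sc x y c : vdot x (fun i => c * y i) = c * vdot x y.
Proof. rewrite /vdot -bsum_scal; apply: bsum_ext => i; ring. Qed.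

Lemma vdot_ge0 x : 0 <= vdot x x.
Proof. apply: bsum_ge0 => i; nra. Qed.

Lemma vnorm_ge0 x : 0 <= vnorm x.
Proof. exact: sqrt_pos. Qed.

Lemma vnorm_sq x : vnorm x * vnorm x = vdot x x.
Proof. rewrite /vnorm sqrt_sqrt //; exact: vdot_ge0. Qed.

Lemma comp_sq_le x i : x i * x i <= vdot x x.
Proof. apply: (term_le_sum (fun i => x i * x i)) => j; nra. Qed.

Lemma comp_le x i : Rabs (x i) <= vnorm x.
Proof.
rewrite -sqrt_Rsqr_abs /vnorm; apply: sqrt_le_1_alt; rewrite /Rsqr; exact: comp_sq_le.
Qed.

Lemma vdot0 x : vdot x x = 0 -> forall i, x i = 0.
Proof. move=> H i; have := comp_sq_le x i; rewrite H => h; nra. Qed.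

Lemma vnorm0 x : vnorm x = 0 -> forall i, x i = 0.
Proof. move=> H; apply: vdot0; rewrite -vnorm_sq H; ring. Qed.

Lemma sq_exp x y t : vdot (fun i => x i + t * y i) (fun i => x i + t * y i)
   = vdot x x + 2 * t * vdot x y + t * t * vdot y y.
Proof.
rewrite /vdot -!bsum_scal -!bsum_plus; apply: bsum_ext => i; ring.
Qed.

Lemma CS_sq x y : vdot x y * vdot x y <= vdot x x * vdot y y.
Proof.
have Hx := vdot_ge0 x; have Hy := vdot_ge0 y.
case: (Req_dec (vdot y y) 0) => HB.
  have Hy0 := vdot0 y HB.
  have -> : vdot x y = 0.
    rewrite /vdot (@bsum_ext _ _ (fun _ => 0)); last by move=> i; rewrite Hy0; ring.
    by rewrite bsum_const; ring.
  nra.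
have Hb : 0 < vdot y y by lra.
have := vdot_ge0 (fun i => x i + (- (vdot x y / vdot y y)) * y i).
rewrite sq_exp => H.
have : 0 <= vdot y y * (vdot x x + 2 * - (vdot x y / vdot y y) * vdot x y +
     - (vdot x y / vdot y y) * - (vdot x y / vdot y y) * vdot y y) by nra.
have -> : vdot y y * (vdot x x + 2 * - (vdot x y / vdot y y) * vdot x y +
     - (vdot x y / vdot y y) * - (vdot x y / vdot y y) * vdot y y)
   = vdot x x * vdot y y - vdot x y * vdot x y by field; lra.
lra.
Qed.

Lemma CS x y : Rabs (vdot x y) <= vnorm x * vnorm y.
Proof.
rewrite -sqrt_Rsqr_abs /vnorm -sqrt_mult_alt; last exact: vdot_ge0.
apply: sqrt_le_1_alt; rewrite /Rsqr; exact: CS_sq.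
Qed.

Lemma sqrt_le_sq a b : 0 <= b -> a <= b * b -> sqrt a <= b.
Proof.
move=> Hb H. rewrite -(sqrt_square b) //; exact: sqrt_le_1_alt.
Qed.

Lemma vnorm_tri x y : vnorm (fun i => x i + y i) <= vnorm x + vnorm y.
Proof.
apply: sqrt_le_sq; first by have := vnorm_ge0 x; have := vnorm_ge0 y; lra.
have -> : (fun i => x i + y i) = (fun i => x i + 1 * y i).
  by apply: functional_extensionality => i; ring.
rewrite sq_exp -!vnorm_sq.
have := CS x y; have := Rle_abs (vdot x y). nra.
Qed.

Lemma vnorm_sc c x : vnorm (fun i => c * x i) = Rabs c * vnorm x.
Proof.
rewrite /vnorm vdot_sc vdot_comm vdot_sc -Rmult_assoc sqrt_mult_alt; last nra.
by rewrite -/(Rsqr c) sqrt_Rsqr_abs.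
Qed.

Lemma l1_ge0 x : 0 <= l1 x.
Proof. apply: bsum_ge0 => i; exact: Rabs_pos. Qed.

Lemma vnorm_le_l1 x : vnorm x <= l1 x.
Proof.
apply: sqrt_le_sq; first exact: l1_ge0.
rewrite /vdot {2}/l1 Rmult_comm -bsum_scal; apply: bsum_le => i.
have := term_le_sum (fun i => Rabs (x i)) i (fun j => Rabs_pos _).
have := Rabs_pos (x i). rewrite -/(l1 x).
have -> : x i * x i = Rabs (x i) * Rabs (x i).
  by rewrite -Rabs_mult Rabs_right; [|nra].
nra.
Qed.

Lemma dot_l1 x y : Rabs (vdot x y) <= l1 x * vnorm y.
Proof.
apply: Rle_trans (bsum_abs _) _. rewrite /l1 Rmult_comm -bsum_scal; apply: bsum_le => i.
rewrite Rabs_mult; have := comp_le y i; have := Rabs_pos (x i); nra.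
Qed.

Lemma vdot_bound x c : (forall i, Rabs (x i) <= c) -> vdot x x <= INR n * (c * c).
Proof.
move=> H; rewrite -bsum_const; apply: bsum_le => i.
have := H i; have := Rabs_pos (x i).
have -> : x i * x i = Rabs (x i) * Rabs (x i).
  by rewrite -Rabs_mult Rabs_right; [|nra].
nra.
Qed.

Lemma vsub_sym x y : vnorm (vsub x y) = vnorm (vsub y x).
Proof.
have -> : vsub x y = (fun i => -1 * vsub y x i).
  apply: functional_extensionality => i; rewrite /vsub; ring.
rewrite vnorm_sc Rabs_Ropp Rabs_R1; ring.
Qed.

Lemma vsub_tri x y z : vnorm (vsub x z) <= vnorm (vsub x y) + vnorm (vsub y z).
Proof.
have -> : vsub x z = (fun i => vsub x y i + vsub y z i).
  apply: functional_extensionality => i; rewrite /vsub; ring.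
exact: vnorm_tri.
Qed.

Lemma vnorm_rev x y : Rabs (vnorm x - vnorm y) <= vnorm (vsub x y).
Proof.
have h1 := vsub_tri x y (vzero n). have h2 := vsub_tri y x (vzero n).
have e : forall z : vec n, vsub z (vzero n) = z.
  move=> z; apply: functional_extensionality => i; rewrite /vsub /vzero; ring.
rewrite !e in h1 h2. rewrite (vsub_sym y x) in h2.
apply: Rabs_le; lra.
Qed.

End Vec.

Definition seg {n} (x d : vec n) (t : R) : vec n := fun i => x i + t * d i.

Section Anal.
Context {n : nat}.
Implicit Types x y z c d : vec n.

Lemma seg_deriv (f : vec n -> R) (Gf : vec n -> vec n) x d t :
  has_grad f (seg x d t) (Gf (seg x d t)) ->
  derivable_pt_lim (fun s => f (seg x d s)) t (vdot (Gf (seg x d t)) d).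
Proof.
move=> Hg eps Heps.
have Hd := vnorm_ge0 d.
have He' : 0 < eps / (2 * (vnorm d + 1)) by apply: Rdiv_lt_0_compat; lra.
have [d0 [Hd0 Hy]] := Hg _ He'.
have Hdel : 0 < d0 / (vnorm d + 1) by apply: Rdiv_lt_0_compat; lra.
exists (mkposreal _ Hdel) => h Hh0 Hh /=.
have E : vsub (seg x d (t + h)) (seg x d t) = (fun i => h * d i).
  apply: functional_extensionality => i; rewrite /vsub /seg; ring.
have Hn : vnorm (vsub (seg x d (t + h)) (seg x d t)) = Rabs h * vnorm d.
  by rewrite E vnorm_sc.
have Hah : 0 < Rabs h by apply: Rabs_pos_lt.
have Hlt : vnorm (vsub (seg x d (t + h)) (seg x d t)) < d0.
  rewrite Hn. have : Rabs h * (vnorm d + 1) < d0 / (vnorm d + 1) * (vnorm d + 1).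
    by apply: Rmult_lt_compat_r; [lra | exact: Hh].
  have -> : d0 / (vnorm d + 1) * (vnorm d + 1) = d0 by field; lra.
  nra.
have := Hy _ Hlt. rewrite E vdot_sc vnorm_sc => H.
have -> : (f (seg x d (t + h)) - f (seg x d t)) / h - vdot (Gf (seg x d t)) d
   = (f (seg x d (t + h)) - f (seg x d t) - h * vdot (Gf (seg x d t)) d) / h by field.
rewrite /Rdiv Rabs_mult Rabs_inv.
apply: (Rle_lt_trans _ (eps / (2 * (vnorm d + 1)) * vnorm d)).
  apply: (Rmult_le_reg_l (Rabs h)) => //.
  have -> : forall A, Rabs h * (A * / Rabs h) = A by move=> A; field; lra.
  lra.
have : eps / (2 * (vnorm d + 1)) * vnorm d <= eps / 2.
  rewrite /Rdiv Rinv_mult. have : / (vnorm d + 1) * vnorm d <= 1.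
    apply: (Rmult_le_reg_l (vnorm d + 1)); first lra.
    rewrite -Rmult_assoc Rinv_r; lra.
  have : 0 < / (vnorm d + 1) by apply: Rinv_0_lt_compat; lra.
  move=> *; nra.
lra.
Qed.

Lemma seg_in_ball x y c r t : vnorm (vsub x c) < r -> vnorm (vsub y c) < r ->
  0 <= t <= 1 -> vnorm (vsub (seg x (vsub y x) t) c) < r.
Proof.
move=> Hx Hy Ht.
have -> : vsub (seg x (vsub y x) t) c =
   (fun i => (fun i => (1 - t) * vsub x c i) i + (fun i => t * vsub y c i) i).
  apply: functional_extensionality => i; rewrite /vsub /seg; ring.
apply: Rle_lt_trans (vnorm_tri _ _) _.
rewrite !vnorm_sc !Rabs_right; try lra.
case: (Req_dec t 0) => Ht0; first by subst; lra.
nra.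
Qed.

Lemma seg0 x d : seg x d 0 = x.
Proof. apply: functional_extensionality => i; rewrite /seg; ring. Qed.

Lemma seg1 x y : seg x (vsub y x) 1 = y.
Proof. apply: functional_extensionality => i; rewrite /seg /vsub; ring. Qed.

Lemma vsub_seg x d t : vsub (seg x d t) x = (fun i => t * d i).
Proof. apply: functional_extensionality => i; rewrite /seg /vsub; ring. Qed.

Lemma mvt (f : vec n -> R) (Gf : vec n -> vec n) c r x y :
  (forall z, vnorm (vsub z c) < r -> has_grad f z (Gf z)) ->
  vnorm (vsub x c) < r -> vnorm (vsub y c) < r ->
  exists xi, vnorm (vsub xi c) < r /\ vnorm (vsub xi x) <= vnorm (vsub y x) /\
    f y - f x = vdot (Gf xi) (vsub y x).
Proof.
move=> Hg Hx Hy.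
have [t [Ht Htb]] : exists t, (fun s => f (seg x (vsub y x) s)) 1 - (fun s => f (seg x (vsub y x) s)) 0
   = (fun s => vdot (Gf (seg x (vsub y x) s)) (vsub y x)) t * (1 - 0) /\ 0 < t < 1.
  apply: (MVT_cor2 (fun s => f (seg x (vsub y x) s))
     (fun s => vdot (Gf (seg x (vsub y x) s)) (vsub y x)) 0 1); first lra.
  move=> s Hs; apply: seg_deriv; apply: Hg; exact: seg_in_ball.
exists (seg x (vsub y x) t); split; first by apply: seg_in_ball => //; lra.
split.
  rewrite vsub_seg vnorm_sc Rabs_right; last lra.
  have := vnorm_ge0 (vsub y x); nra.
move: Ht => /=; rewrite seg0 seg1 => ->; ring.
Qed.

Lemma lip (f : vec n -> R) (Gf : vec n -> vec n) c r K x y :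
  (forall z, vnorm (vsub z c) < r -> has_grad f z (Gf z)) ->
  (forall z, vnorm (vsub z c) < r -> l1 (Gf z) <= K) ->
  vnorm (vsub x c) < r -> vnorm (vsub y c) < r ->
  Rabs (f y - f x) <= K * vnorm (vsub y x).
Proof.
move=> Hg HK Hx Hy.
have [xi [Hxi [_ ->]]] := mvt _ _ _ _ _ _ Hg Hx Hy.
apply: Rle_trans (dot_l1 _ _) _.
apply: Rmult_le_compat_r; [exact: vnorm_ge0 | exact: HK].
Qed.

End Anal.

Lemma vsub_self {n} (c : vec n) : vnorm (vsub c c) = 0.
Proof.
have -> : vsub c c = (fun i => 0 * c i).
  apply: functional_extensionality => i; rewrite /vsub; ring.
rewrite vnorm_sc Rabs_R0; ring.
Qed.

Lemma C2_pack {n} (f : vec n -> R) c r : 0 < r -> C2_on f c r ->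
  exists (G : vec n -> vec n) rho K, 0 < rho /\ rho <= r /\ 0 < K /\
  (forall y, vnorm (vsub y c) < rho -> has_grad f y (G y)) /\
  (forall y, vnorm (vsub y c) < rho -> l1 (G y) <= K) /\
  (forall x y, vnorm (vsub x c) < rho -> vnorm (vsub y c) < rho ->
     Rabs (f y - f x - vdot (G x) (vsub y x)) <= K * (vnorm (vsub y x) * vnorm (vsub y x))).
Proof.
move=> Hr [G [H [HG [HH HC]]]].
have Hc : vnorm (vsub c c) < r by rewrite vsub_self.
have [d1 [Hd1 Hcont]] := HC c Hc 1 Rlt_0_1.
set B0 := \big[Rplus/0]_(i < n) \big[Rplus/0]_(j < n) Rabs (H c i j) + 1.
set rho := Rmin r d1.
have Hrho : 0 < rho by apply: Rmin_glb_lt.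
have Hrr : rho <= r by apply: Rmin_l.
have Hrd : rho <= d1 by apply: Rmin_r.
have Hin : forall y, vnorm (vsub y c) < rho -> vnorm (vsub y c) < r by move=> y; lra.
have Hbound : forall y, vnorm (vsub y c) < rho -> forall i j, Rabs (H y i j) <= B0.
  move=> y Hy i j.
  have h1 : vnorm (vsub y c) < d1 by lra.
  have := Hcont y (Hin y Hy) h1 i j.
  have h2 := term_le_sum (fun j => Rabs (H c i j)) j (fun _ => Rabs_pos _).
  have h3 := term_le_sum (fun i => \big[Rplus/0]_(j < n) Rabs (H c i j)) i
              (fun i => bsum_ge0 _ (fun _ => Rabs_pos _)).
  have h4 := Rabs_triang (H y i j - H c i j) (H c i j).
  have e4 : H y i j - H c i j + H c i j = H y i j by ring.
  rewrite e4 in h4.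
  rewrite /B0. lra.
have HB0 : 0 < B0.
  rewrite /B0; have := bsum_ge0 (fun i => \big[Rplus/0]_(j < n) Rabs (H c i j))
              (fun i => bsum_ge0 _ (fun _ => Rabs_pos _)); lra.
set KH := INR n * B0.
have HKH : 0 <= KH by have := pos_INR n; rewrite /KH; nra.
have Hl1H : forall y, vnorm (vsub y c) < rho -> forall i, l1 (H y i) <= KH.
  move=> y Hy i; rewrite /l1 /KH -bsum_const; apply: bsum_le => j; exact: Hbound.
have Glip : forall x y i, vnorm (vsub x c) < rho -> vnorm (vsub y c) < rho ->
    Rabs (G y i - G x i) <= KH * vnorm (vsub y x).
  move=> x y i Hx Hy.
  apply: (lip (fun z => G z i) (fun z => H z i) c rho KH x y) => //.
    move=> z Hz; apply: HH; exact: Hin.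
  move=> z Hz; exact: Hl1H.
set KG := l1 (G c) + INR n * (KH * rho).
have HlG : forall y, vnorm (vsub y c) < rho -> l1 (G y) <= KG.
  move=> y Hy. rewrite /KG /l1 -bsum_const -bsum_plus; apply: bsum_le => i.
  have := Glip c y i ltac:(by rewrite vsub_self) Hy.
  have := Rabs_triang (G y i - G c i) (G c i).
  have -> : G y i - G c i + G c i = G y i by ring.
  have := vnorm_ge0 (vsub y c). nra.
have HKG : 0 <= KG.
  rewrite /KG; have := l1_ge0 (G c); have := pos_INR n; have := Rmult_le_pos _ _ HKH (Rlt_le _ _ Hrho); nra.
exists G, rho, (KG + INR n * KH + 1).
split; first done. split; first done. split; first by have := pos_INR n; nra.
split; first by move=> y Hy; apply: HG; exact: Hin.
split; first by move=> y Hy; have := HlG y Hy; have := pos_INR n; nra.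
move=> x y Hx Hy.
have [xi [Hxi [Hxd ->]]] := mvt f G c rho x y (fun z Hz => HG z (Hin z Hz)) Hx Hy.
rewrite -vdot_subl.
apply: Rle_trans (dot_l1 _ _) _.
have Hl : l1 (vsub (G xi) (G x)) <= INR n * (KH * vnorm (vsub y x)).
  rewrite /l1 -bsum_const; apply: bsum_le => i; rewrite {1}/vsub.
  have := Glip x xi i Hx Hxi. have := Rmult_le_compat_l _ _ _ HKH Hxd. lra.
have := vnorm_ge0 (vsub y x). have := pos_INR n.
have := l1_ge0 (vsub (G xi) (G x)). nra.
Qed.

Lemma norm_est {m} (a c : vec m) : 0 < vnorm a ->
  Rabs (vnorm c - vnorm a - vdot a (vsub c a) / vnorm a) <=
    vdot (vsub c a) (vsub c a) / vnorm a.
Proof.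
move=> HN.
set N := vnorm a; set D := vdot a (vsub c a); set B := vdot (vsub c a) (vsub c a).
set Cn := vnorm c.
have HN' : 0 < N := HN.
have Ec : c = (fun i => a i + 1 * vsub c a i).
  apply: functional_extensionality => i; rewrite /vsub; ring.
have HCn : Cn * Cn = N * N + 2 * D + B.
  rewrite /Cn vnorm_sq {1 2}Ec sq_exp /N vnorm_sq; rewrite /D /B; ring.
clear Ec.
have Hac : vdot a c = N * N + D.
  have -> : c = (fun i => 1 * a i + 1 * vsub c a i).
    apply: functional_extensionality => i; rewrite /vsub; ring.
  rewrite vdot_lin /N vnorm_sq /D; ring.
have HCS : vdot a c <= N * Cn by have := CS a c; have := Rle_abs (vdot a c); rewrite /N /Cn; lra.
have HB : 0 <= B by apply: vdot_ge0.
have HC0 : 0 <= Cn by apply: vnorm_ge0.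
have L : N * N + D <= N * Cn by lra.
have U : N * Cn <= N * N + D + B.
  have Hp : 0 <= N * N + D + B by nra.
  apply: Rsqr_incr_0_var; last exact: Hp.
  rewrite /Rsqr. have -> : N * Cn * (N * Cn) = N * N * (Cn * Cn) by ring.
  rewrite HCn. nra.
have -> : Cn - N - D / N = (N * Cn - N * N - D) / N.
  field. exact: Rgt_not_eq.
rewrite /Rdiv Rabs_mult Rabs_inv.
have e1 : Rabs N = N by apply: Rabs_right; lra.
have e2 : Rabs (N * Cn - N * N - D) = N * Cn - N * N - D by apply: Rabs_right; lra.
rewrite e1 e2.
apply: Rmult_le_compat_r; last lra.
apply: Rlt_le; apply: Rinv_0_lt_compat; lra.
Qed.

Definition pvec {n m} (G0 : vec n) (Gr : 'I_m -> vec n) (a : vec m) : vec n :=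
  fun i => \big[Rplus/0]_(j < m) (a j * Gr j i) / vnorm a - G0 i.

Lemma pvec_dot {n m} (G0 : vec n) (Gr : 'I_m -> vec n) (a : vec m) d :
  vdot (pvec G0 Gr a) d = / vnorm a * vdot a (fun j => vdot (Gr j) d) - vdot G0 d.
Proof.
rewrite /vdot /pvec.
rewrite (@bsum_ext _ _ (fun i => / vnorm a * \big[Rplus/0]_(j < m) (a j * (Gr j i * d i))
     + (-1) * (G0 i * d i))); last first.
  move=> i.
  rewrite (@bsum_ext _ (fun j => a j * (Gr j i * d i)) (fun j => d i * (a j * Gr j i)));
    last by move=> j; ring.
  rewrite bsum_scal /Rdiv; ring.
rewrite bsum_plus bsum_scal bsum_scal bsum_exch.
congr (_ * _ + _).
apply: bsum_ext => j. rewrite -bsum_scal. apply: bsum_ext => i; ring.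
ring.
Qed.

Lemma h_est {n m} (g0 : vec n -> R) (gr : vec n -> vec m) (G0 : vec n) (Gr : 'I_m -> vec n)
  K x0 y : 0 <= K ->
  Rabs (g0 y - g0 x0 - vdot G0 (vsub y x0)) <= K * (vnorm (vsub y x0) * vnorm (vsub y x0)) ->
  (forall j, Rabs (gr y j - gr x0 j - vdot (Gr j) (vsub y x0))
      <= K * (vnorm (vsub y x0) * vnorm (vsub y x0))) ->
  (forall j, l1 (Gr j) <= K) ->
  vnorm (vsub y x0) <= 1 -> 0 < vnorm (gr x0) ->
  Rabs (hfun g0 gr y - hfun g0 gr x0 - vdot (pvec G0 Gr (gr x0)) (vsub y x0))
   <= (INR m * (2 * K * (2 * K)) / vnorm (gr x0) + INR m * K + K)
       * (vnorm (vsub y x0) * vnorm (vsub y x0)).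
Proof.
move=> HK H0 Hr HG Hd1 HN.
rewrite pvec_dot /hfun.
set a := gr x0; set c := gr y; set d := vsub y x0; set N := vnorm a.
have HN' : 0 < N := HN.
set dd := vnorm d.
have Hdd : 0 <= dd by apply: vnorm_ge0.
have Hd1' : dd <= 1 := Hd1.
set Jd := fun j => vdot (Gr j) d.
set b := vsub c a.
have HJ : forall j, Rabs (Jd j) <= K * dd.
  move=> j; rewrite /Jd; apply: Rle_trans (dot_l1 _ _) _.
  apply: Rmult_le_compat_r => //; exact: HG.
have He : forall j, Rabs (vsub b Jd j) <= K * (dd * dd).
  move=> j; rewrite /vsub /b /vsub /Jd; exact: Hr.
have Hb : forall j, Rabs (b j) <= 2 * K * dd.
  move=> j. have := He j; have := HJ j.
  have := Rabs_triang (vsub b Jd j) (Jd j).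
  have -> : vsub b Jd j + Jd j = b j by rewrite /vsub; ring.
  have : K * (dd * dd) <= K * dd by apply: Rmult_le_compat_l => //; nra.
  lra.
have Hbb : vdot b b <= INR m * (2 * K * dd * (2 * K * dd)) by apply: vdot_bound.
have T1 := norm_est a c HN. rewrite -/N -/b in T1.
have T2 : Rabs (vdot a (vsub b Jd)) <= N * (INR m * (K * (dd * dd))).
  apply: Rle_trans (CS _ _) _. apply: Rmult_le_compat_l; first exact: vnorm_ge0.
  apply: Rle_trans (vnorm_le_l1 _) _. rewrite /l1 -bsum_const; apply: bsum_le; exact: He.
rewrite vdot_sub in T2.
have E : vnorm c - g0 y - (vnorm a - g0 x0) - (/ N * vdot a Jd - vdot G0 d)
   = (vnorm c - vnorm a - vdot a b / N) + (vdot a b - vdot a Jd) / N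
     - (g0 y - g0 x0 - vdot G0 d).
  rewrite /Rdiv /N; field; apply: Rgt_not_eq; exact: HN.
rewrite E.
have T1' : vdot b b / N <= INR m * (2 * K * (2 * K)) / N * (dd * dd).
  rewrite /Rdiv. have : 0 < / N by apply: Rinv_0_lt_compat.
  move=> hi. have -> : INR m * (2 * K * (2 * K)) * / N * (dd * dd)
     = INR m * (2 * K * dd * (2 * K * dd)) * / N by ring.
  apply: Rmult_le_compat_r; lra.
have T2' : Rabs ((vdot a b - vdot a Jd) / N) <= INR m * K * (dd * dd).
  rewrite /Rdiv Rabs_mult Rabs_inv (Rabs_right N); last lra.
  apply: (Rmult_le_reg_l N) => //.
  have -> : N * (Rabs (vdot a b - vdot a Jd) * / N) = Rabs (vdot a b - vdot a Jd)
    by field; lra.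
  lra.
apply: Rle_trans (Rabs_triang _ _) _.
rewrite Rabs_Ropp.
apply: Rle_trans (Rplus_le_compat_r _ _ _ (Rabs_triang _ _)) _.
have := H0. rewrite -/d -/dd. rewrite -/N. lra.
Qed.

Lemma small_mul a U : 0 < a -> 0 <= U -> a / (2 * (U + 1)) * U < a.
Proof.
move=> Ha HU.
have -> : a / (2 * (U + 1)) * U = a * (U / (2 * (U + 1))) by field; lra.
have : U / (2 * (U + 1)) < 1.
  apply: (Rmult_lt_reg_r (2 * (U + 1))); first lra.
  have -> : U / (2 * (U + 1)) * (2 * (U + 1)) = U by field; lra.
  lra.
have : 0 <= U / (2 * (U + 1)) by apply: Rmult_le_pos; [lra | apply: Rlt_le; apply: Rinv_0_lt_compat; lra].
nra.
Qed.

Lemma grad_uniq {n} (h : vec n -> R) x0 v p C r0 :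
  0 < r0 -> has_grad h x0 v ->
  (forall y, vnorm (vsub y x0) < r0 ->
     Rabs (h y - h x0 - vdot p (vsub y x0)) <= C * (vnorm (vsub y x0) * vnorm (vsub y x0))) ->
  forall d, vdot v d = vdot p d.
Proof.
move=> Hr0 Hg Hest d.
set u := vsub v p.
set U := vnorm u.
have HU : 0 <= U by apply: vnorm_ge0.
have HU0 : U = 0.
  case: (Req_dec U 0) => // HUn.
  have HUp : 0 < U by lra.
  have [d0 [Hd0 Hy]] := Hg (U / 2) ltac:(lra).
  set t := Rmin (Rmin (d0 / (2 * (U + 1))) (r0 / (2 * (U + 1)))) (/ (4 * (Rabs C + 1))).
  have HC := Rabs_pos C.
  have Ht0 : 0 < t.
    apply: Rmin_glb_lt; first apply: Rmin_glb_lt.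
    - apply: Rdiv_lt_0_compat; lra.
    - apply: Rdiv_lt_0_compat; lra.
    - apply: Rinv_0_lt_compat; lra.
  have Ht1 : t <= d0 / (2 * (U + 1)) by apply: Rle_trans (Rmin_l _ _) (Rmin_l _ _).
  have Ht2 : t <= r0 / (2 * (U + 1)) by apply: Rle_trans (Rmin_l _ _) (Rmin_r _ _).
  have Ht3 : t <= / (4 * (Rabs C + 1)) by apply: Rmin_r.
  have Hn : vnorm (vsub (seg x0 u t) x0) = t * U.
    by rewrite vsub_seg vnorm_sc Rabs_right; [|lra].
  have Hs1 := small_mul d0 U Hd0 HU.
  have Hs2 := small_mul r0 U Hr0 HU.
  have Hlt1 : vnorm (vsub (seg x0 u t) x0) < d0 by rewrite Hn; nra.
  have Hlt2 : vnorm (vsub (seg x0 u t) x0) < r0 by rewrite Hn; nra.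
  have A1 := Hy _ Hlt1. have A2 := Hest _ Hlt2.
  rewrite Hn vsub_seg !vdot_sc in A1 A2.
  have Huu : vdot v u - vdot p u = U * U.
    by rewrite -vdot_subl /U vnorm_sq.
  have A3 : t * (U * U) <= U / 2 * (t * U) + C * (t * U * (t * U)).
    have := Rabs_triang (h (seg x0 u t) - h x0 - t * vdot p u)
                        (- (h (seg x0 u t) - h x0 - t * vdot v u)).
    have -> : h (seg x0 u t) - h x0 - t * vdot p u + - (h (seg x0 u t) - h x0 - t * vdot v u)
       = t * (vdot v u - vdot p u) by ring.
    rewrite Huu Rabs_Ropp (Rabs_right (t * (U * U))); last nra.
    lra.
  have Ct : C * t <= 1 / 4.
    have : Rabs C * t <= Rabs C * / (4 * (Rabs C + 1)) by apply: Rmult_le_compat_l.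
    have : Rabs C * / (4 * (Rabs C + 1)) <= 1 / 4.
      apply: (Rmult_le_reg_r (4 * (Rabs C + 1))); first lra.
      have -> : Rabs C * / (4 * (Rabs C + 1)) * (4 * (Rabs C + 1)) = Rabs C by field; lra.
      lra.
    have := Rle_abs C. nra.
  have : t * (U * U) * (1 / 2 - C * t) <= 0 by lra.
  have : 0 < t * (U * U) by apply: Rmult_lt_0_compat; [lra | nra].
  nra.
have H : Rabs (vdot (vsub v p) d) <= 0.
  have := CS (vsub v p) d. rewrite -/u -/U HU0. lra.
rewrite vdot_subl in H.
have := Rle_abs (vdot v d - vdot p d).
have := Rle_abs (- (vdot v d - vdot p d)). rewrite Rabs_Ropp. lra.
Qed.

Lemma choice_fin {m} {A : Type} (P : 'I_m -> A -> Prop) :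
  (forall j, exists x, P j x) -> exists f : 'I_m -> A, forall j, P j (f j).
Proof.
move=> H. exists (fun j => proj1_sig (constructive_indefinite_description _ (H j))).
move=> j; exact: proj2_sig.
Qed.

Lemma lip_cont (f : R -> R) L : 0 <= L -> (forall s t, Rabs (f s - f t) <= L * Rabs (s - t)) ->
  continuity f.
Proof.
move=> HL H x eps Heps. exists (eps / (L + 1)); split.
  apply: Rdiv_lt_0_compat; lra.
move=> y [_ Hy]. rewrite /dist /= /R_dist in Hy *.
apply: Rle_lt_trans (H y x) _.
have : L * Rabs (y - x) <= L * (eps / (L + 1)) by apply: Rmult_le_compat_l; lra.
have : L * (eps / (L + 1)) < eps.
  apply: (Rmult_lt_reg_r (L + 1)); first lra.
  have -> : L * (eps / (L + 1)) * (L + 1) = L * eps by field; lra.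
  nra.
lra.
Qed.

Definition clamp (T t : R) := Rmax 0 (Rmin T t).

Lemma clamp_range T t : 0 <= T -> 0 <= clamp T t <= T.
Proof.
move=> HT; rewrite /clamp; split; first by apply: Rmax_l.
apply: Rmax_lub => //; exact: Rmin_l.
Qed.

Lemma clamp_id T t : 0 <= t <= T -> clamp T t = t.
Proof.
move=> Ht; rewrite /clamp Rmin_right; last lra. rewrite Rmax_right; lra.
Qed.

Lemma Rmin_lip T s t : Rabs (Rmin T s - Rmin T t) <= Rabs (s - t).
Proof. rewrite /Rmin; case: Rle_dec => ?; case: Rle_dec => ?; split_Rabs; lra. Qed.

Lemma Rmax_lip s t : Rabs (Rmax 0 s - Rmax 0 t) <= Rabs (s - t).
Proof. rewrite /Rmax; case: Rle_dec => ?; case: Rle_dec => ?; split_Rabs; lra. Qed.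

Lemma clamp_lip T s t : Rabs (clamp T s - clamp T t) <= Rabs (s - t).
Proof. rewrite /clamp; apply: Rle_trans (Rmax_lip _ _) _; exact: Rmin_lip. Qed.

Lemma nz_norm {m} (a : vec m) : a <> vzero m -> 0 < vnorm a.
Proof.
move=> H. have := vnorm_ge0 a. case: (Req_dec (vnorm a) 0) => [E|]; last lra.
exfalso; apply: H; apply: functional_extensionality => i; rewrite /vzero; exact: vnorm0.
Qed.

Lemma vsub_segs {n} (x w : vec n) a b : vsub (seg x w a) (seg x w b) = (fun i => (a - b) * w i).
Proof. apply: functional_extensionality => i; rewrite /vsub /seg; ring. Qed.

Theorem lemma5p3 (n m : nat) (Hn : (1 <= n)%nat) (Hm : (1 <= m)%nat)
  (g0 : vec n -> R) (gr : vec n -> vec m) (xbar : vec n)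
  (Hsmooth : exists r, 0 < r /\ C2_on g0 xbar r /\
                       forall j : 'I_m, C2_on (fun x => gr x j) xbar r)
  (Hg0 : g0 xbar = 0) (Hgr : gr xbar = vzero m) :
  forall delta, 0 < delta ->
  exists eps, 0 < eps /\ exists rho, 0 < rho /\
    forall x0 : vec n, vnorm (vsub x0 xbar) < rho ->
      gr x0 <> vzero m ->
      Rabs (hfun g0 gr x0) < eps * vnorm (gr x0) ->
      (exists v, has_grad (hfun g0 gr) x0 v /\ delta <= vnorm v) ->
      exists xt : vec n, hfun g0 gr xt = 0 /\
        vnorm (vsub xt x0) <= 2 * Rabs (hfun g0 gr x0) / delta.
Proof.
move=> delta Hdelta.
case: Hsmooth => r [Hr [HC0 HCj]].
have [G0 [rho0 [K0 [Hrho0 [_ [HK0 [HG0 [HlG0 HT0]]]]]]]] := C2_pack g0 xbar r Hr HC0.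
have Hj : forall j : 'I_m, exists t : (vec n -> vec n) * (R * R),
   0 < t.2.1 /\ 0 < t.2.2 /\
   (forall y, vnorm (vsub y xbar) < t.2.1 -> has_grad (fun x => gr x j) y (t.1 y)) /\
   (forall y, vnorm (vsub y xbar) < t.2.1 -> l1 (t.1 y) <= t.2.2) /\
   (forall x y, vnorm (vsub x xbar) < t.2.1 -> vnorm (vsub y xbar) < t.2.1 ->
      Rabs (gr y j - gr x j - vdot (t.1 x) (vsub y x)) <= t.2.2 * (vnorm (vsub y x) * vnorm (vsub y x))).
  move=> j.
  have [G [rh [K [h1 [_ [h3 [h4 [h5 h6]]]]]]]] := C2_pack (fun x => gr x j) xbar r Hr (HCj j).
  by exists (G, (rh, K)).
have [F HF] := choice_fin _ Hj.
set Gr := fun j => (F j).1.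
set S := \big[Rplus/0]_(j < m) / (F j).2.1.
have HS : 0 <= S.
  apply: bsum_ge0 => j; have := HF j; case=> h1 _; apply: Rlt_le; exact: Rinv_0_lt_compat.
set rg := / (S + 1).
have Hrg : 0 < rg by apply: Rinv_0_lt_compat; lra.
have Hrgj : forall j, rg <= (F j).2.1.
  move=> j; have [h1 _] := HF j.
  have h2 := term_le_sum (fun j => / (F j).2.1) j
     (fun j => Rlt_le _ _ (Rinv_0_lt_compat _ (proj1 (HF j)))).
  rewrite /rg -(Rinv_inv ((F j).2.1)).
  apply: Rinv_le_contravar; first exact: Rinv_0_lt_compat.
  rewrite -/S in h2. lra.
set Kg := \big[Rplus/0]_(j < m) (F j).2.2 + 1.
have HKgj : forall j, (F j).2.2 <= Kg.
  move=> j; have := term_le_sum (fun j => (F j).2.2) j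
     (fun j => Rlt_le _ _ (proj1 (proj2 (HF j)))). rewrite /Kg. lra.
have HKg : 0 < Kg.
  rewrite /Kg; have := bsum_ge0 (fun j => (F j).2.2) (fun j => Rlt_le _ _ (proj1 (proj2 (HF j)))).
  lra.
set Rs := Rmin rho0 rg.
have HRs : 0 < Rs by apply: Rmin_glb_lt.
have HRs0 : Rs <= rho0 by apply: Rmin_l.
have HRsg : Rs <= rg by apply: Rmin_r.
set K := K0 + Kg.
have HK : 0 < K by rewrite /K; lra.
have B0 : forall y, vnorm (vsub y xbar) < Rs -> vnorm (vsub y xbar) < rho0 by move=> y; lra.
have Bj : forall y j, vnorm (vsub y xbar) < Rs -> vnorm (vsub y xbar) < (F j).2.1.
  move=> y j Hy; have := Hrgj j; lra.
have PG0 : forall y, vnorm (vsub y xbar) < Rs -> has_grad g0 y (G0 y).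
  by move=> y Hy; apply: HG0; apply: B0.
have PlG0 : forall y, vnorm (vsub y xbar) < Rs -> l1 (G0 y) <= K.
  move=> y Hy; have := HlG0 y (B0 y Hy); rewrite /K; lra.
have PT0 : forall x y, vnorm (vsub x xbar) < Rs -> vnorm (vsub y xbar) < Rs ->
    Rabs (g0 y - g0 x - vdot (G0 x) (vsub y x)) <= K * (vnorm (vsub y x) * vnorm (vsub y x)).
  move=> x y Hx Hy; apply: Rle_trans (HT0 x y (B0 x Hx) (B0 y Hy)) _.
  apply: Rmult_le_compat_r; first by have := vnorm_ge0 (vsub y x); nra.
  rewrite /K; lra.
have PGr : forall j y, vnorm (vsub y xbar) < Rs -> has_grad (fun x => gr x j) y (Gr j y).
  move=> j y Hy; have [_ [_ [h _]]] := HF j; exact: h (Bj y j Hy).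
have PlGr : forall j y, vnorm (vsub y xbar) < Rs -> l1 (Gr j y) <= K.
  move=> j y Hy; have [_ [_ [_ [h _]]]] := HF j; have := h y (Bj y j Hy).
  have := HKgj j; rewrite /K /Gr; lra.
have PTr : forall j x y, vnorm (vsub x xbar) < Rs -> vnorm (vsub y xbar) < Rs ->
    Rabs (gr y j - gr x j - vdot (Gr j x) (vsub y x)) <= K * (vnorm (vsub y x) * vnorm (vsub y x)).
  move=> j x y Hx Hy; have [_ [_ [_ [_ h]]]] := HF j.
  apply: Rle_trans (h x y (Bj x j Hx) (Bj y j Hy)) _.
  apply: Rmult_le_compat_r; first by have := vnorm_ge0 (vsub y x); nra.
  have := HKgj j; rewrite /K; lra.
have Lgr : forall j x y, vnorm (vsub x xbar) < Rs -> vnorm (vsub y xbar) < Rs ->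
    Rabs (gr y j - gr x j) <= K * vnorm (vsub y x).
  move=> j x y Hx Hy.
  exact: (lip (fun z => gr z j) (Gr j) xbar Rs K x y (PGr j) (PlGr j) Hx Hy).
have Lg0 : forall x y, vnorm (vsub x xbar) < Rs -> vnorm (vsub y xbar) < Rs ->
    Rabs (g0 y - g0 x) <= K * vnorm (vsub y x).
  move=> x y Hx Hy. exact: (lip g0 G0 xbar Rs K x y PG0 PlG0 Hx Hy).
set M := INR m * K.
have HM : 0 <= M by have := pos_INR m; rewrite /M; nra.
have Hxbar : vnorm (vsub xbar xbar) < Rs by rewrite vsub_self.
have HNb : forall x, vnorm (vsub x xbar) < Rs -> vnorm (gr x) <= M * vnorm (vsub x xbar).
  move=> x Hx. apply: Rle_trans (vnorm_le_l1 _) _.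
  rewrite /l1 /M Rmult_assoc -bsum_const; apply: bsum_le => j.
  have := Lgr j xbar x Hxbar Hx. rewrite Hgr /vzero Rminus_0_r. done.
have Lh : forall x y, vnorm (vsub x xbar) < Rs -> vnorm (vsub y xbar) < Rs ->
    Rabs (hfun g0 gr y - hfun g0 gr x) <= (M + K) * vnorm (vsub y x).
  move=> x y Hx Hy. rewrite /hfun.
  have h1 : Rabs (vnorm (gr y) - vnorm (gr x)) <= M * vnorm (vsub y x).
    apply: Rle_trans (vnorm_rev _ _) _. apply: Rle_trans (vnorm_le_l1 _) _.
    rewrite /l1 /M Rmult_assoc -bsum_const; apply: bsum_le => j.
    exact: Lgr.
  have h2 := Lg0 x y Hx Hy.
  have -> : vnorm (gr y) - g0 y - (vnorm (gr x) - g0 x)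
     = (vnorm (gr y) - vnorm (gr x)) + - (g0 y - g0 x) by ring.
  apply: Rle_trans (Rabs_triang _ _) _. rewrite Rabs_Ropp. lra.
set A := 8 * INR m * K * K + 2 * (INR m * K + K) * M.
have HA : 0 <= A.
  have := pos_INR m. rewrite /A. have : 0 <= INR m * K * K by have := pos_INR m; nra.
  have : 0 <= (INR m * K + K) * M by apply: Rmult_le_pos => //; have := pos_INR m; nra.
  lra.
set rho := Rmin Rs 1 / 2.
have Hrho : 0 < rho by rewrite /rho; have := Rmin_glb_lt Rs 1 0 HRs Rlt_0_1; lra.
have HrhoRs : rho <= Rs / 2 by rewrite /rho; have := Rmin_l Rs 1; lra.
have Hrho1 : rho <= 1 / 2 by rewrite /rho; have := Rmin_r Rs 1; lra.
set e1 := delta / (4 * (M + 1)).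
set e2 := delta * delta / (2 * (A + 1)).
have He1 : 0 < e1 by apply: Rdiv_lt_0_compat; lra.
have He2 : 0 < e2 by apply: Rdiv_lt_0_compat; nra.
set eps := Rmin e1 e2.
have Heps : 0 < eps by apply: Rmin_glb_lt.
have Heps1 : eps * (4 * (M + 1)) <= delta.
  have : eps <= e1 by apply: Rmin_l.
  rewrite /e1 => h. have := Rmult_le_compat_r (4 * (M + 1)) _ _ ltac:(lra) h.
  have -> : delta / (4 * (M + 1)) * (4 * (M + 1)) = delta by field; lra.
  done.
have Heps2 : eps * (2 * (A + 1)) <= delta * delta.
  have : eps <= e2 by apply: Rmin_r.
  rewrite /e2 => h. have := Rmult_le_compat_r (2 * (A + 1)) _ _ ltac:(lra) h.
  have -> : delta * delta / (2 * (A + 1)) * (2 * (A + 1)) = delta * delta by field; lra.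
  done.
exists eps; split => //; exists rho; split => //.
move=> x0 Hx0 Hgr0 Habs [v [Hv Hvd]].
have HN := nz_norm _ Hgr0.
set N := vnorm (gr x0).
have HN' : 0 < N := HN.
set hx := hfun g0 gr x0.
have Habs' : Rabs hx < eps * N := Habs.
have Bx0 : vnorm (vsub x0 xbar) < Rs by lra.
have HNM : N <= M * rho.
  apply: Rle_trans (HNb x0 Bx0) _. apply: Rmult_le_compat_l => //; lra.
case: (Req_dec hx 0) => Hhx.
  exists x0; split => //. rewrite vsub_self.
  apply: Rmult_le_pos; [have := Rabs_pos hx; lra | apply: Rlt_le; exact: Rinv_0_lt_compat].
have Hahx : 0 < Rabs hx by apply: Rabs_pos_lt.
set T := 2 * Rabs hx / delta.
have HTd : T * delta = 2 * Rabs hx by rewrite /T; field; lra.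
have HTpos : 0 < T by rewrite /T; apply: Rdiv_lt_0_compat; lra.
have HTrho : T <= rho / 2.
  have : T * delta <= rho / 2 * delta.
    rewrite HTd.
    have : eps * N <= eps * (M * rho) by apply: Rmult_le_compat_l; lra.
    have : eps * (M * rho) * 4 <= delta * rho.
      have -> : eps * (M * rho) * 4 = eps * (4 * M) * rho by ring.
      apply: Rmult_le_compat_r; lra.
    lra.
  move=> h. apply: (Rmult_le_reg_r delta) => //.
set CH := INR m * (2 * K * (2 * K)) / N + INR m * K + K.
have HCH : CH * T <= delta / 2.
  set Q := INR m * (2 * K * (2 * K)) / N.
  have HQ : Q * N = INR m * (2 * K * (2 * K)) by rewrite /Q; field; lra.
  have HQ0 : 0 <= Q.
    rewrite /Q; apply: Rmult_le_pos; first by have := pos_INR m; nra.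
    apply: Rlt_le; exact: Rinv_0_lt_compat.
  have HmK : 0 <= INR m * K + K by have := pos_INR m; nra.
  have h1 : CH * T * delta = Q * (2 * Rabs hx) + (INR m * K + K) * (2 * Rabs hx).
    rewrite -HTd /CH -/Q; ring.
  have h2 : Q * (2 * Rabs hx) <= Q * (2 * (eps * N)) by apply: Rmult_le_compat_l; lra.
  have h3 : (INR m * K + K) * (2 * Rabs hx) <= (INR m * K + K) * (2 * (eps * M)).
    apply: Rmult_le_compat_l => //.
    have hNM : N <= M by nra.
    have : eps * N <= eps * M by apply: Rmult_le_compat_l; lra.
    lra.
  have h4 : Q * (2 * (eps * N)) = eps * (8 * INR m * K * K).
    have -> : Q * (2 * (eps * N)) = 2 * eps * (Q * N) by ring.
    rewrite HQ; ring.
  have h5 : CH * T * delta <= eps * A.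
    rewrite h1. have -> : eps * A = eps * (8 * INR m * K * K) + (INR m * K + K) * (2 * (eps * M)) by rewrite /A; ring.
    lra.
  have h6 : eps * A <= delta * delta / 2.
    have : eps * A <= eps * (A + 1) by apply: Rmult_le_compat_l; lra.
    lra.
  apply: (Rmult_le_reg_r delta) => //.
  have -> : delta / 2 * delta = delta * delta / 2 by field.
  lra.
have By : forall y, vnorm (vsub y x0) < rho -> vnorm (vsub y xbar) < Rs.
  move=> y Hy; have := vsub_tri y x0 xbar; lra.
set p := pvec (G0 x0) (fun j => Gr j x0) (gr x0).
have Hest : forall y, vnorm (vsub y x0) < rho ->
   Rabs (hfun g0 gr y - hfun g0 gr x0 - vdot p (vsub y x0))
     <= CH * (vnorm (vsub y x0) * vnorm (vsub y x0)).
  move=> y Hy. apply: h_est.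
  - lra.
  - exact: PT0 x0 y Bx0 (By y Hy).
  - move=> j; exact: PTr j x0 y Bx0 (By y Hy).
  - move=> j; exact: PlGr j x0 Bx0.
  - lra.
  - exact: HN.
have Hvp := grad_uniq (hfun g0 gr) x0 v p CH rho Hrho Hv Hest.
have Hv0 : 0 < vnorm v by lra.
set kap := - hx / (Rabs hx * vnorm v).
set w := fun i => kap * v i.
have Hw : vnorm w = 1.
  rewrite /w vnorm_sc /kap /Rdiv Rabs_mult Rabs_Ropp Rabs_inv Rabs_mult
     (Rabs_right (Rabs hx)); last lra.
  rewrite (Rabs_right (vnorm v)); last lra.
  field; lra.
have Hvw : vdot v w = - vnorm v * (hx / Rabs hx).
  rewrite /w vdot_sc -vnorm_sq /kap; field; lra.
set phi := fun t => hfun g0 gr (seg x0 w (clamp T t)).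
have Hseg : forall t, 0 <= t <= T -> vnorm (vsub (seg x0 w t) x0) = t.
  move=> t Ht; rewrite vsub_seg vnorm_sc Hw Rabs_right; lra.
have HsegB : forall t, 0 <= t <= T -> vnorm (vsub (seg x0 w t) xbar) < Rs.
  move=> t Ht; apply: By; rewrite Hseg //; lra.
have Hcont : continuity phi.
  apply: (lip_cont phi (M + K)); first lra.
  move=> s t. rewrite /phi.
  have Hs := clamp_range T s (Rlt_le _ _ HTpos).
  have Ht := clamp_range T t (Rlt_le _ _ HTpos).
  apply: Rle_trans (Lh _ _ (HsegB _ Ht) (HsegB _ Hs)) _.
  rewrite vsub_segs vnorm_sc Hw Rmult_1_r.
  apply: Rmult_le_compat_l; first lra. exact: clamp_lip.
have Hphi0 : phi 0 = hx.
  rewrite /phi clamp_id; last lra. by rewrite seg0.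
have HphiT : hx * phi T <= 0.
  rewrite /phi clamp_id; last lra.
  have Hy : vnorm (vsub (seg x0 w T) x0) < rho by rewrite Hseg; lra.
  have E := Hest _ Hy. rewrite -Hvp Hseg in E; last lra.
  rewrite vsub_seg vdot_sc Hvw in E.
  have HE : CH * (T * T) <= delta / 2 * T.
    have -> : CH * (T * T) = CH * T * T by ring.
    apply: Rmult_le_compat_r; lra.
  set e := hfun g0 gr (seg x0 w T) - hx - T * (- vnorm v * (hx / Rabs hx)) in E.
  have -> : hfun g0 gr (seg x0 w T) = hx + T * (- vnorm v * (hx / Rabs hx)) + e
    by rewrite /e; ring.
  have Hsq0 : hx * hx = Rabs hx * Rabs hx.
    by rewrite -Rabs_mult Rabs_right; [|nra].
  have Hhh : hx * (hx / Rabs hx) = Rabs hx.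
    rewrite /Rdiv -Rmult_assoc Hsq0; field; lra.
  have -> : hx * (hx + T * (- vnorm v * (hx / Rabs hx)) + e)
     = hx * hx - T * vnorm v * (hx * (hx / Rabs hx)) + hx * e by ring.
  rewrite Hhh.
  have Hhe : hx * e <= Rabs hx * (delta / 2 * T).
    apply: Rle_trans (Rle_abs _) _. rewrite Rabs_mult.
    apply: Rmult_le_compat_l; first lra. lra.
  have Hsq : hx * hx = Rabs hx * Rabs hx.
    by rewrite -Rabs_mult Rabs_right; [|nra].
  have : T * vnorm v * Rabs hx >= T * delta * Rabs hx.
    apply: Rle_ge. apply: Rmult_le_compat_r; first lra.
    apply: Rmult_le_compat_l; first lra. done.
  have : T * delta = 2 * Rabs hx := HTd.
  nra.
have [z [Hz Hz0]] := IVT_cor phi 0 T Hcont (Rlt_le _ _ HTpos) ltac:(rewrite Hphi0; nra).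
exists (seg x0 w z); split.
  by move: Hz0; rewrite /phi clamp_id.
rewrite Hseg //. lra.
Qed.
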